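(* Let $\gamma>0$ and $s>0$, let $G(u,v;s)=(u^2+v^2)^{-s}$ and $D_1=\partial/\partial u$. Define polynomials $P_j(u,v;s)$ by $P_1(u,v;s)=-2su$ and $P_{j+1}(u,v;s)=(u^2+v^2)\,\partial_uP_j(u,v;s)-2(s+j)uP_j(u,v;s)$. Then for $u\ge\gamma$, $v\in\mathbb R$ and $j\ge1$, $$\frac{D_1^jG(u,v;s)}{G(u,v;s)}=\frac{P_j(u,v;s)}{(u^2+v^2)^j},$$ and the following estimates hold for all $u\ge\gamma$, $v\in\mathbb R$: $$-\frac{2s}{\gamma}\le\frac{D_1G}{G}<0,\qquad -\frac{s}{4\gamma^2(s+1)}\le\frac{D_1^2G}{G}\le\frac{2s(2s+1)}{\gamma^2},$$ $$-\frac{2s(2s+1)(2s+2)}{\gamma^3}\le\frac{D_1^3G}{G}\le\frac{2s(2s+2)}{\gamma^3(s+2)^2},\qquad -\frac{2s(s+1)(2s+2)\cdot3}{\gamma^4}\le\frac{D_1^4G}{G}\le\frac{2s(2s+1)(2s+2)(2s+3)}{\gamma^4},$$ where $G$ and its derivatives are evaluated at $(u,v;s)$.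
   Context: In particular $P_2=2s(2s+1)u^2-2sv^2$, $P_3=-2s(2s+1)(2s+2)u^3+3(2s)(2s+2)uv^2$, $P_4=(2s)(2s+2)[(2s+1)(2s+3)u^4-6(2s+3)u^2v^2+3v^4]$. *)

(* Defs.v *)
From Stdlib Require Import Reals.
From Coquelicot Require Import Coquelicot.
Open Scope R_scope.

Definition G (s u v : R) : R := Rpower (u ^ 2 + v ^ 2) (- s).

Definition D1G (j : nat) (s u v : R) : R :=
  Derive_n (fun x => G s x v) j u.

(* Pseq n = P_{n+1}: P_1 = -2 s u,
   P_{j+1} = (u^2+v^2) d/du P_j - 2 (s+j) u P_j *)
Fixpoint Pseq (n : nat) (s u v : R) : R :=
  match n with
  | O => - 2 * s * u
  | S m => (u ^ 2 + v ^ 2) * Derive (fun x => Pseq m s x v) u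
           - 2 * (s + INR (S m)) * u * Pseq m s u v
  end.

Definition P (j : nat) (s u v : R) : R := Pseq (j - 1) s u v.

(* Main.v *)
Require Import Defs.
From Stdlib Require Import Reals Lra Psatz List Lia.
From Coquelicot Require Import Coquelicot.
Open Scope R_scope.
Import ListNotations.

Fixpoint pe (l : list R) (x : R) : R :=
  match l with nil => 0 | a :: l' => a + x * pe l' x end.
Fixpoint padd (l1 l2 : list R) : list R :=
  match l1, l2 with
  | nil, _ => l2
  | _, nil => l1
  | a :: l1', b :: l2' => (a + b) :: padd l1' l2'
  end.
Definition pscal (c : R) (l : list R) := map (Rmult c) l.
Fixpoint pd (l : list R) : list R :=
  match l with nil => nil | _ :: l' => padd l' (0 :: pd l') end.

Lemma pe_padd l1 l2 x : pe (padd l1 l2) x = pe l1 x + pe l2 x.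
Proof.
revert l2; induction l1 as [|a l1 IH]; intros [|b l2]; simpl; try ring.
rewrite IH; ring.
Qed.
Lemma pe_pscal c l x : pe (pscal c l) x = c * pe l x.
Proof. unfold pscal; induction l as [|a l IH]; simpl; [ring|]. rewrite IH; ring. Qed.

Lemma pe_derive l x : is_derive (pe l) x (pe (pd l) x).
Proof.
induction l as [|a l IH].
- change (is_derive (fun _ : R => 0) x 0). auto_derive; auto.
- change (is_derive (fun y => a + y * pe l y) x (pe (padd l (0 :: pd l)) x)).
  rewrite pe_padd. cbn [pe].
  assert (E: ex_derive (pe l) x) by (eexists; exact IH).
  auto_derive. exact E.
  replace (Derive (fun x0 : R => pe l x0) x) with (pe (pd l) x) by (symmetry; apply is_derive_unique; exact IH). ring.
Qed.

Definition Q (s v : R) : nat -> list R :=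
  fix Q n := match n with
  | O => [0; -2 * s]
  | S m => padd (padd (pscal (v^2) (pd (Q m))) (0 :: 0 :: pd (Q m)))
                (pscal (-2 * (s + INR (S m))) (0 :: Q m))
  end.

Lemma Q_S s v m : Q s v (S m) = padd (padd (pscal (v^2) (pd (Q s v m))) (0 :: 0 :: pd (Q s v m)))
                (pscal (-2 * (s + INR (S m))) (0 :: Q s v m)).
Proof. reflexivity. Qed.

Lemma Pseq_Q n s v x : Pseq n s x v = pe (Q s v n) x.
Proof.
revert x; induction n as [|m IH]; intros x.
- simpl. ring.
- change (Pseq (S m) s x v) with ((x ^ 2 + v ^ 2) * Derive (fun y => Pseq m s y v) x
           - 2 * (s + INR (S m)) * x * Pseq m s x v).
  rewrite (Derive_ext _ (pe (Q s v m)) x IH).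
  rewrite (is_derive_unique _ _ _ (pe_derive _ x)).
  rewrite IH, Q_S, !pe_padd, !pe_pscal. cbn [pe]. ring.
Qed.

Definition h (s v : R) (n : nat) (x : R) : R :=
  G s x v * pe (Q s v n) x / (x ^ 2 + v ^ 2) ^ (S n).

Lemma h_deriv s v n x : 0 < x ^ 2 + v ^ 2 -> is_derive (h s v n) x (h s v (S n) x).
Proof.
intros Hr.
assert (E: ex_derive (pe (Q s v n)) x) by (eexists; apply pe_derive).
unfold h, G, Rpower.
auto_derive.
- repeat split; auto. change (x * (x * 1) + v * (v * 1)) with (x^2+v^2). intro Hc. apply Rmult_integral in Hc as [Hc|Hc]. lra. apply pow_nonzero in Hc; [auto|lra].
- replace (Derive (fun x0 : R => pe (Q s v n) x0) x) with (pe (pd (Q s v n)) x)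
    by (symmetry; apply is_derive_unique; apply pe_derive).
  change (match n with 0%nat => 1 | S _ => INR n + 1 end) with (INR (S n)).
  rewrite Q_S, !pe_padd, !pe_pscal. cbn [pe]. rewrite S_INR.
  replace (x*(x*1)+v*(v*1)) with (x^2+v^2) by ring.
  rewrite <- !tech_pow_Rmult. set (r := x^2+v^2) in *.
  assert (r ^ n <> 0) by (apply pow_nonzero; lra).
  field. split; [replace (x * (x * x ^ 0) + v * (v * v ^ 0)) with r by (unfold r; simpl; ring); auto | unfold r in Hr; simpl in Hr; lra].
Qed.

Lemma G_deriv s v x : 0 < x ^ 2 + v ^ 2 -> is_derive (fun y => G s y v) x (h s v 0 x).
Proof.
intros Hr. unfold h, G, Rpower. auto_derive.
- simpl in Hr; lra.
- cbn [Q pe]. simpl in Hr |- *. field. lra.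
Qed.

Lemma Dn_G s v n x : 0 < x -> Derive_n (fun y => G s y v) (S n) x = h s v n x.
Proof.
revert x; induction n as [|n IH]; intros x Hx.
- simpl. apply is_derive_unique, G_deriv. nra.
- change (Derive (Derive_n (fun y => G s y v) (S n)) x = h s v (S n) x).
  rewrite (Derive_ext_loc _ (h s v n)).
  + apply is_derive_unique, h_deriv. nra.
  + apply filter_imp with (fun t => 0 < t).
    * intros t Ht. apply IH; exact Ht.
    * apply (open_gt 0 x Hx).
Qed.

Lemma combine a b q lo hi : 0 < a -> a <= b -> lo <= q <= hi -> lo <= 0 -> 0 <= hi ->
  lo * b <= q * a <= hi * b.
Proof. intros; split; nra. Qed.

Lemma L2a s y : 0 < s -> - (s / (4 * (s + 1))) <= 4*s*(s+1)*y^2 - 2*s*y.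
Proof.
intros Hs.
assert (H: 4*s*(s+1)*y^2 - 2*s*y - - (s / (4 * (s + 1))) = s*(4*(s+1)*y-1)^2 / (4*(s+1))) by (field; lra).
assert (0 <= s*(4*(s+1)*y-1)^2 / (4*(s+1))).
{ unfold Rdiv; apply Rmult_le_pos; [apply Rmult_le_pos; [lra|apply pow2_ge_0]|apply Rlt_le, Rinv_0_lt_compat; lra]. }
lra.
Qed.

Lemma L2b s y : 0 < s -> 0 < y <= 1 -> 4*s*(s+1)*y^2 - 2*s*y <= 2*s*(2*s+1).
Proof.
intros Hs Hy.
assert (0 <= 2*s*(1-y)*(2*(s+1)*(1+y)-1)).
{ apply Rmult_le_pos; [apply Rmult_le_pos|]; nra. }
nra.
Qed.

Lemma L3a s y : 0 < s -> 0 < y <= 1 -> -(2*s+1) <= 3*y^2 - (2*s+4)*y^3.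
Proof.
intros Hs Hy.
assert (y^3 <= y^2) by (simpl; nra).
assert (0 <= (2*s+4)*(y^2 - y^3)) by (apply Rmult_le_pos; lra).
assert (y^2 <= 1) by (simpl; nra).
nra.
Qed.

Lemma L3b s y : 0 < s -> 0 < y <= 1 -> 3*y^2 - (2*s+4)*y^3 <= 1 / (s+2)^2.
Proof.
intros Hs Hy.
set (t := (s+2)*y).
assert (Ht: 0 <= t) by (unfold t; nra).
assert (H1: (t-1)^2*(2*t+1) >= 0).
{ apply Rle_ge, Rmult_le_pos; [apply pow2_ge_0|lra]. }
assert (H2: 3*y^2 - (2*s+4)*y^3 = t^2*(3-2*t) / (s+2)^2) by (unfold t; field; lra).
rewrite H2. unfold Rdiv. apply Rmult_le_compat_r.
- apply Rlt_le, Rinv_0_lt_compat. nra.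
- nra.
Qed.

Lemma L4 s y : 0 < s -> 0 < y <= 1 ->
  -(3*(s+1)) <= 4*(s+2)*(s+3)*y^4 - 12*(s+2)*y^3 + 3*y^2 <= (2*s+1)*(2*s+3).
Proof.
intros Hs Hy.
set (w := 4*(s+2)*(s+3)*y^2 - 12*(s+2)*y + 3).
assert (E: 4*(s+2)*(s+3)*y^4 - 12*(s+2)*y^3 + 3*y^2 = y^2 * w) by (unfold w; ring).
rewrite E.
assert (Hy2: 0 < y^2 <= 1) by (simpl; split; nra).
assert (Wlo: (s+3)*w - (3*(s+3) - 9*(s+2)) = (s+2)*(2*(s+3)*y-3)^2) by (unfold w; ring).
assert (0 <= (s+2)*(2*(s+3)*y-3)^2) by (apply Rmult_le_pos; [lra|apply pow2_ge_0]).
assert (Wlo2: -(3*(s+1)) <= w).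
{ assert ((s+3)*(w + 3*(s+1)) >= 0) by nra.
  nra. }
assert (Whi: w - (2*s+1)*(2*s+3) = 4*(s+2)*(y-1)*((s+3)*(y+1) - 3)) by (unfold w; ring).
assert (Whi2: w <= (2*s+1)*(2*s+3)).
{ assert (0 <= 4*(s+2)*(1-y)*((s+3)*(y+1) - 3)) by (apply Rmult_le_pos; [apply Rmult_le_pos|]; nra).
  nra. }
split; destruct (Rle_lt_dec 0 w); nra.
Qed.

Lemma ratio s u v n : 0 < u ->
  D1G (S n) s u v / G s u v = pe (Q s v n) u / (u ^ 2 + v ^ 2) ^ (S n).
Proof.
intros Hu. unfold D1G. rewrite Dn_G by exact Hu. unfold h.
assert (0 < G s u v) by (unfold G, Rpower; apply exp_pos).
assert (0 < u^2+v^2) by nra.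
assert ((u^2+v^2)^(S n) <> 0) by (apply pow_nonzero; lra).
field. split; lra.
Qed.

Lemma pe0 s v x : pe (Q s v 0) x = -2*s*x.
Proof. simpl. ring. Qed.
Lemma pe1 s v x : pe (Q s v 1) x = 2*s*(2*s+1)*x^2 - 2*s*v^2.
Proof. simpl. ring. Qed.
Lemma pe2 s v x : pe (Q s v 2) x = -2*s*(2*s+1)*(2*s+2)*x^3 + 3*(2*s)*(2*s+2)*x*v^2.
Proof. simpl. ring. Qed.
Lemma pe3 s v x : pe (Q s v 3) x = 2*s*(2*s+2)*((2*s+1)*(2*s+3)*x^4 - 6*(2*s+3)*x^2*v^2 + 3*v^4).
Proof. simpl. ring. Qed.

Lemma invb gamma u k : 0 < gamma -> gamma <= u -> 0 < / u ^ k <= / gamma ^ k.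
Proof.
intros. split.
- apply Rinv_0_lt_compat, pow_lt; lra.
- apply Rinv_le_contravar; [apply pow_lt; lra|]. apply pow_incr; lra.
Qed.

Theorem lemma7p7 (gamma s : R) (hgamma : 0 < gamma) (hs : 0 < s) :
  (forall (j : nat) (u v : R), (1 <= j)%nat -> gamma <= u ->
     D1G j s u v / G s u v = P j s u v / (u ^ 2 + v ^ 2) ^ j) /\
  (forall u v : R, gamma <= u ->
     (- (2 * s / gamma) <= D1G 1 s u v / G s u v /\
      D1G 1 s u v / G s u v < 0) /\
     (- (s / (4 * gamma ^ 2 * (s + 1))) <= D1G 2 s u v / G s u v /\
      D1G 2 s u v / G s u v <= 2 * s * (2 * s + 1) / gamma ^ 2) /\
     (- (2 * s * (2 * s + 1) * (2 * s + 2) / gamma ^ 3) <= D1G 3 s u v / G s u v /\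
      D1G 3 s u v / G s u v <= 2 * s * (2 * s + 2) / (gamma ^ 3 * (s + 2) ^ 2)) /\
     (- (2 * s * (s + 1) * (2 * s + 2) * 3 / gamma ^ 4) <= D1G 4 s u v / G s u v /\
      D1G 4 s u v / G s u v <= 2 * s * (2 * s + 1) * (2 * s + 2) * (2 * s + 3) / gamma ^ 4)).
Proof.
split.
- intros j u v Hj Hu. destruct j as [|n]; [lia|].
  rewrite ratio by lra. unfold P. rewrite Pseq_Q. simpl (S n - 1)%nat. rewrite Nat.sub_0_r. reflexivity.
- intros u v Hu.
  assert (Hu0 : 0 < u) by lra.
  assert (Hr : 0 < u^2+v^2) by nra.
  set (y := u^2/(u^2+v^2)).
  assert (Hy : 0 < y <= 1).
  { unfold y; split.
    - unfold Rdiv; apply Rmult_lt_0_compat; [nra|apply Rinv_0_lt_compat; lra].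
    - apply (Rmult_le_reg_r (u^2+v^2)); [lra|]. unfold Rdiv. rewrite Rmult_assoc, Rinv_l by lra. nra. }
  assert (Hg : gamma <> 0) by lra.
  assert (Hun : u <> 0) by lra.
  assert (Hrn : u^2+v^2 <> 0) by lra.
  rewrite !ratio by lra. rewrite pe0, pe1, pe2, pe3.
  split; [|split; [|split]].
  + assert (E : -2*s*u/(u^2+v^2)^1 = (-2*s*y) * / u^1) by (unfold y; field; auto).
    rewrite E.
    destruct (invb gamma u 1 hgamma Hu) as [A B].
    destruct (combine _ _ (-2*s*y) (-2*s) 0 A B) as [C1 C2]; try nra.
    split.
    * replace (- (2 * s / gamma)) with (-2*s * /gamma^1) by (field; auto). exact C1.
    * assert (0 < s*y* /u^1) by (apply Rmult_lt_0_compat; [apply Rmult_lt_0_compat|]; lra). nra.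
  + assert (E : (2*s*(2*s+1)*u^2 - 2*s*v^2)/(u^2+v^2)^2 = (4*s*(s+1)*y^2 - 2*s*y) * / u^2)
      by (unfold y; field; auto).
    rewrite E.
    destruct (invb gamma u 2 hgamma Hu) as [A B].
    destruct (combine _ _ (4*s*(s+1)*y^2 - 2*s*y) (- (s / (4 * (s + 1)))) (2*s*(2*s+1)) A B) as [C1 C2].
    { split; [apply L2a|apply L2b]; auto. }
    { assert (0 < s / (4*(s+1))) by (unfold Rdiv; apply Rmult_lt_0_compat; [lra|apply Rinv_0_lt_compat; lra]). lra. }
    { nra. }
    split.
    * replace (- (s / (4 * gamma ^ 2 * (s + 1)))) with (- (s / (4 * (s + 1))) * / gamma^2) by (field; split; [lra|auto]). exact C1.
    * replace (2 * s * (2 * s + 1) / gamma ^ 2) with (2*s*(2*s+1) * /gamma^2) by (field; auto). exact C2.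
  + assert (E : (-2*s*(2*s+1)*(2*s+2)*u^3 + 3*(2*s)*(2*s+2)*u*v^2)/(u^2+v^2)^3
                = (2*s*(2*s+2)*(3*y^2 - (2*s+4)*y^3)) * / u^3)
      by (unfold y; field; auto).
    rewrite E.
    destruct (invb gamma u 3 hgamma Hu) as [A B].
    assert (Hc : 0 < 2*s*(2*s+2)) by nra.
    assert (Hp : 0 < 1/(s+2)^2) by (unfold Rdiv; rewrite Rmult_1_l; apply Rinv_0_lt_compat; nra).
    destruct (combine _ _ (2*s*(2*s+2)*(3*y^2 - (2*s+4)*y^3)) (2*s*(2*s+2) * -(2*s+1)) (2*s*(2*s+2)*(1/(s+2)^2)) A B) as [C1 C2].
    { split; apply Rmult_le_compat_l; try lra; [apply L3a|apply L3b]; auto. }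
    { nra. }
    { nra. }
    split.
    * replace (- (2 * s * (2 * s + 1) * (2 * s + 2) / gamma ^ 3)) with (2*s*(2*s+2) * -(2*s+1) * / gamma^3) by (field; auto). exact C1.
    * replace (2 * s * (2 * s + 2) / (gamma ^ 3 * (s + 2) ^ 2)) with (2*s*(2*s+2)*(1/(s+2)^2) * /gamma^3) by (field; split; [lra|auto]). exact C2.
  + assert (E : 2*s*(2*s+2)*((2*s+1)*(2*s+3)*u^4 - 6*(2*s+3)*u^2*v^2 + 3*v^4)/(u^2+v^2)^4
                = (2*s*(2*s+2)*(4*(s+2)*(s+3)*y^4 - 12*(s+2)*y^3 + 3*y^2)) * / u^4)
      by (unfold y; field; auto).
    rewrite E.
    destruct (invb gamma u 4 hgamma Hu) as [A B].
    assert (Hc : 0 < 2*s*(2*s+2)) by nra.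
    destruct (L4 s y hs Hy) as [D1 D2].
    destruct (combine _ _ (2*s*(2*s+2)*(4*(s+2)*(s+3)*y^4 - 12*(s+2)*y^3 + 3*y^2)) (2*s*(2*s+2) * -(3*(s+1))) (2*s*(2*s+2)*((2*s+1)*(2*s+3))) A B) as [C1 C2].
    { split; apply Rmult_le_compat_l; lra. }
    { nra. }
    { nra. }
    split.
    * replace (- (2 * s * (s + 1) * (2 * s + 2) * 3 / gamma ^ 4)) with (2*s*(2*s+2) * -(3*(s+1)) * / gamma^4) by (field; auto). exact C1.
    * replace (2 * s * (2 * s + 1) * (2 * s + 2) * (2 * s + 3) / gamma ^ 4) with (2*s*(2*s+2)*((2*s+1)*(2*s+3)) * /gamma^4) by (field; auto). exact C2.
Qed.
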